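(* The sequence $\left(\frac{h(n)}{\log n}\right)_{n=2}^\infty$ is $\mathcal I_0$-convergent to $0$; that is, for every $\varepsilon>0$ the set $\{n\ge 2: \frac{h(n)}{\log n}\ge\varepsilon\}$ belongs to $\mathcal I_0$.
   Context: $\mathbb N$ denotes the set of positive integers. For $n>1$ with canonical factorization $n=p_1^{\alpha_1}\cdots p_k^{\alpha_k}$ (distinct primes $p_j$, $\alpha_j\ge1$), $h(n)=\min_{1\le j\le k}\alpha_j$. For $A\subset\mathbb N$ the convergence exponent is $\lambda(A)=\inf\{t>0:\sum_{a\in A}a^{-t}<\infty\}$, and $\mathcal I_0=\{A\subset\mathbb N:\lambda(A)=0\}$. A sequence $(x_n)$ is $\mathcal I$-convergent to $L$ if for every $\varepsilon>0$ the set $\{n:|x_n-L|\ge\varepsilon\}$ belongs to $\mathcal I$. *)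

(* Defs.v *)
From mathcomp Require Import ssreflect ssrbool ssrnat seq prime.
From Stdlib Require Import Reals ClassicalDescription.

(* h n = min_j alpha_j where n = prod p_j^alpha_j (canonical factorization);
   primes n is the sorted list of prime divisors, logn p n the exponent.
   For n > 1 the list is nonempty; the value for n <= 1 is irrelevant (0). *)
Definition h (n : nat) : nat :=
  match primes n with
  | [::] => 0
  | p :: ps => foldr (fun q m => minn (logn q n) m) (logn p n) ps
  end.

Open Scope R_scope.

(* sum_{a in A} a^{-t} converges (A is a set of positive integers;
   terms with k = 0 are excluded since A ⊂ N = {1,2,...}). *)
Definition series_conv (A : nat -> Prop) (t : R) : Prop :=
  exists l : R, infinite_sum
    (fun k => match k with
              | O => 0
              | S _ => if excluded_middle_informative (A k)
                       then Rpower (INR k) (- t) else 0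
              end) l.

Definition is_glb (E : R -> Prop) (m : R) : Prop :=
  (forall x, E x -> m <= x) /\ (forall b, (forall x, E x -> b <= x) -> b <= m).

(* convergence exponent lambda(A) = inf {t > 0 : series_conv A t};
   lambda(A) = 0 means 0 is the infimum of this set (in particular the set
   is nonempty, since inf of the empty set is +infinity). *)
Definition conv_exp_zero (A : nat -> Prop) : Prop :=
  is_glb (fun t => 0 < t /\ series_conv A t) 0.

Definition in_I0 (A : nat -> Prop) : Prop :=
  (forall n, A n -> (1 <= n)%nat) /\ conv_exp_zero A.

(* Main.v *)
Require Import Defs.
From Stdlib Require Import Reals.
Open Scope R_scope.
From Stdlib Require Import Lra.
From mathcomp Require ssreflect ssrbool eqtype ssrnat seq div prime zify.

Module H.
Import ssreflect ssrbool eqtype ssrnat seq div prime zify.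

Definition smooth (C n : nat) : bool := (0 < n)%N && all (fun p => p <= C)%N (primes n).

Definition w (t : R) (C n : nat) : R := if smooth C n then Rpower (INR n) (- t) else 0.

Fixpoint sumR (f : nat -> R) (M : nat) : R :=
  match M with O => 0 | S k => sumR f k + f (S k) end.

Lemma Rpower_pos x y : 0 < Rpower x y.
Proof. rewrite /Rpower; apply: exp_pos. Qed.

Lemma w_ge0 t C n : 0 <= w t C n.
Proof. rewrite /w; case: (smooth C n); [apply: Rlt_le; apply: Rpower_pos | lra]. Qed.

Lemma sumR_le f g M : (forall n, (0 < n)%N -> f n <= g n) -> sumR f M <= sumR g M.
Proof. move=> H; elim: M => [|M IH] /=; [lra|]. have := H M.+1 isT; lra. Qed.

Lemma sumR_ext f g M : (forall n, f n = g n) -> sumR f M = sumR g M.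
Proof. move=> H; elim: M => [|M IH] //=; by rewrite IH H. Qed.

Lemma sumR_plus f g M : sumR (fun n => f n + g n) M = sumR f M + sumR g M.
Proof. elim: M => [|M IH] /=; [lra|]. rewrite IH; lra. Qed.

Lemma sumR_scal r f M : sumR (fun n => r * f n) M = r * sumR f M.
Proof. elim: M => [|M IH] /=; [lra|]. rewrite IH; lra. Qed.

Lemma div_succ_dvd (q M : nat) : (0 < q)%N -> q %| M.+1 -> M.+1 %/ q = (M %/ q).+1.
Proof. move=> q0 /dvdnP [k hk]. have := divn_eq M q. have := ltn_pmod M q0. rewrite hk mulnK //. nia. Qed.

Lemma div_succ_ndvd (q M : nat) : (0 < q)%N -> ~~ (q %| M.+1) -> M.+1 %/ q = (M %/ q).
Proof. move=> q0 hd. have := divn_eq M q. have := ltn_pmod M q0.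
have := divn_eq M.+1 q. have := ltn_pmod M.+1 q0. move: hd; rewrite /dvdn => /eqP hd.
 nia. Qed.

Lemma sumR_div q g M : (0 < q)%N ->
  sumR (fun n => if q %| n then g (n %/ q) else 0) M = sumR g (M %/ q).
Proof.
move=> q0; elim: M => [|M IH] /=; first by rewrite div0n.
rewrite IH; case hd: (q %| M.+1).
- by rewrite (div_succ_dvd _ _ q0 hd).
- rewrite (div_succ_ndvd _ _ q0 (negbT hd)); lra.
Qed.

Lemma sum_smooth0 t M : sumR (w t 0) M <= 1.
Proof.
have H : forall n, (1 < n)%N -> w t 0 n = 0.
  move=> n n1; rewrite /w /smooth.
  case: (pdivP n1) => p pp pn.
  have : p \in primes n by rewrite mem_primes pp pn; case: n n1 {pn}.
  move=> pin.
  case hs: (all _ _); last by rewrite andbF.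
  move/allP: hs => /(_ p pin); rewrite leqn0 => /eqP p0.
  by move: pp; rewrite p0.
elim: M => [|M IH]; first (simpl; lra).
case: M IH => [|M] IH.
- rewrite /= /w /=. have -> : Rpower 1 (-t) = 1.
    rewrite /Rpower ln_1 Rmult_0_r exp_0 //.
  case: (smooth 0 1); lra.
- change (sumR (w t 0) M.+1 + w t 0 M.+2 <= 1). rewrite H //. lra.
Qed.

Lemma smooth_nonprime C n : ~~ prime C.+1 -> smooth C.+1 n = smooth C n.
Proof.
move=> np; rewrite /smooth; congr andb; apply/allP/allP => H p pin.
- have := H p pin. rewrite leq_eqVlt => /orP [/eqP e|//].
  move: pin; rewrite mem_primes e => /andP [pp _]. by rewrite pp in np.
- have := H p pin. move=> h; exact: leqW.
Qed.

Lemma split_w t C n : prime C.+1 -> (0 < n)%N ->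
  w t C.+1 n <= w t C n + (if C.+1 %| n then Rpower (INR C.+1) (-t) * w t C.+1 (n %/ C.+1) else 0).
Proof.
move=> pq n0.
have wC := w_ge0 t C n.
have RHS2 : 0 <= (if C.+1 %| n then Rpower (INR C.+1) (-t) * w t C.+1 (n %/ C.+1) else 0).
  case: (C.+1 %| n); last lra. apply: Rmult_le_pos; [apply: Rlt_le; apply: Rpower_pos| apply: w_ge0].
rewrite {1}/w. case hs: (smooth C.+1 n); last lra.
case hsC: (smooth C n).
  have : w t C n = Rpower (INR n) (-t) by rewrite /w hsC.
  lra.
have [p pin pC] : exists2 p, p \in primes n & ~~ (p <= C)%N.
  move: hsC; rewrite /smooth n0 /= => /negbT. rewrite -has_predC => /hasP [p pin pc].
  by exists p.
move: (hs); rewrite /smooth n0 /= => /allP /(_ p pin) pC1.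
have ep : p = C.+1 by apply/eqP; rewrite eqn_leq pC1 ltnNge.
have dq : C.+1 %| n by move: pin; rewrite mem_primes ep => /and3P [].
rewrite dq.
have q0 : (0 < C.+1)%N by [].
have nq0 : (0 < n %/ C.+1)%N by rewrite divn_gt0 // dvdn_leq.
have sq : smooth C.+1 (n %/ C.+1).
  rewrite /smooth nq0 /=. apply/allP => r rin.
  have : r \in primes n.
    move: rin; rewrite !mem_primes => /and3P [-> _ rd]. rewrite n0 /=.
    exact: dvdn_trans rd (dvdn_div dq).
  move: hs; rewrite /smooth n0 /= => /allP; apply.
rewrite /w sq.
have hq : 0 < INR C.+1 by apply: lt_0_INR; apply/ltP.
have hnq : 0 < INR (n %/ C.+1) by apply: lt_0_INR; apply/ltP.
rewrite Rpower_mult_distr //.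
change (match C with 0%N => 1 | _.+1 => INR C + 1 end) with (INR C.+1).
rewrite hsC -mult_INR multE mulnC divnK //. lra.
Qed.

Lemma smooth_bound t (tp : 0 < t) C : exists B, forall M, sumR (w t C) M <= B.
Proof.
elim: C => [|C [B HB]]; first by exists 1; apply: sum_smooth0.
case pq: (prime C.+1); last first.
  exists B => M. rewrite (sumR_ext _ (w t C)) //.
  move=> n; by rewrite /w smooth_nonprime ?pq.
set r := Rpower (INR C.+1) (-t).
have r0 : 0 < r by apply: Rpower_pos.
have r1 : r < 1.
  rewrite /r /Rpower -exp_0; apply: exp_increasing.
  have : 0 < ln (INR C.+1).
    rewrite -ln_1; apply: ln_increasing; first lra.
    have : (2 <= C.+1)%N by apply: prime_gt1.
    move/leP/le_INR => /=. lra.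
  move=> h; nra.
have B0 : 0 <= B by have := HB 0%N.
exists (B / (1 - r)).
have key : forall M k, (k <= M)%N -> sumR (w t C.+1) k <= B / (1 - r).
  elim=> [|M IH] k.
    rewrite leqn0 => /eqP -> /=. apply: Rmult_le_pos => //.
    apply: Rlt_le; apply: Rinv_0_lt_compat; lra.
  move=> kM.
  case: k kM => [|k] kM.
    rewrite /=. apply: Rmult_le_pos => //. apply: Rlt_le; apply: Rinv_0_lt_compat; lra.
  have step := sumR_le (w t C.+1) (fun n => w t C n + (if C.+1 %| n then r * w t C.+1 (n %/ C.+1) else 0)) k.+1 (fun n hn => split_w t C n pq hn).
  rewrite sumR_plus in step.
  rewrite (sumR_div C.+1 (fun m => r * w t C.+1 m) k.+1) // sumR_scal in step.
  have hk : (k.+1 %/ C.+1 <= M)%N.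
    have : (k.+1 %/ C.+1 < k.+1)%N by apply: ltn_Pdiv; [apply: prime_gt1|].
    move=> h; apply: leq_trans (_ : k <= M)%N; [by []| by []].
  have := IH _ hk. have := HB k.+1.
  move=> h1 h2.
  have h3 : r * sumR (w t C.+1) (k.+1 %/ C.+1) <= r * (B / (1 - r)).
    apply: Rmult_le_compat_l; lra.
  have e : B + r * (B / (1 - r)) = B / (1 - r) by field; lra.
  lra.
move=> M0; exact: (key M0 M0 (leqnn M0)).
Qed.

Lemma foldr_min (f : nat -> nat) (ps : seq nat) a x :
  x \in a :: ps -> (foldr (fun q m => minn (f q) m) (f a) ps <= f x)%N.
Proof.
elim: ps => [|b ps IH] /=.
  by rewrite inE => /eqP ->.
rewrite !inE => /orP [xa|/orP [/eqP ->|xin]].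
- apply: leq_trans (geq_minr _ _) _. apply: IH; by rewrite inE xa.
- exact: geq_minl.
- apply: leq_trans (geq_minr _ _) _. apply: IH; by rewrite inE xin orbT.
Qed.

Lemma h_le n p : p \in primes n -> (h n <= logn p n)%N.
Proof.
rewrite /h. case: (primes n) => [//|a ps] pin.
exact: (foldr_min (fun q => logn q n) ps a p pin).
Qed.

Lemma INR_expn p k : INR (expn p k) = (INR p ^ k)%R.
Proof.
elim: k => [|k IH]; first by rewrite expn0.
rewrite expnS -multE mult_INR IH; reflexivity.
Qed.

Lemma A_smooth eps (he : 0 < eps) C (hC : exp (1 / eps) < INR C) n :
  (2 <= n)%N -> INR (h n) / ln (INR n) >= eps -> smooth C n.
Proof.
move=> n2 hr. have n0 : (0 < n)%N by apply: leq_trans n2.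
rewrite /smooth n0 /=. apply/allP => p pin.
have pp : prime p by move: pin; rewrite mem_primes => /andP [].
have p2 : (1 < p)%N by apply: prime_gt1.
have hpn : (p ^ h n <= n)%N.
  apply: leq_trans (_ : p ^ logn p n <= n)%N.
    rewrite leq_exp2l //; exact: h_le.
  apply: dvdn_leq => //; exact: pfactor_dvdnn.
have Rn : 1 < INR n by have := le_INR _ _ (leP n2); rewrite /=; lra.
have Rp : 1 < INR p by have := le_INR _ _ (leP p2); rewrite /=; lra.
have Ln : 0 < ln (INR n) by rewrite -ln_1; apply: ln_increasing; lra.
have Lp : 0 < ln (INR p) by rewrite -ln_1; apply: ln_increasing; lra.
have hi : INR (h n) * ln (INR p) <= ln (INR n).
  rewrite -ln_pow; last lra.
  rewrite -INR_expn.
  have hp0 : 0 < INR (p ^ h n) by apply: lt_0_INR; apply/ltP; rewrite expn_gt0 (ltnW p2).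
  have hle : INR (p ^ h n) <= INR n by apply: le_INR; exact/leP.
  case: (Rle_lt_or_eq_dec _ _ hle) => e.
    apply: Rlt_le; exact: ln_increasing.
  rewrite e; lra.
have hH : eps * ln (INR n) <= INR (h n).
  have e : INR (h n) = INR (h n) / ln (INR n) * ln (INR n) by field; lra.
  rewrite e. apply: Rmult_le_compat_r; lra.
have H0 : 0 < INR (h n) by nra.
have hlp : eps * ln (INR p) <= 1.
  have : INR (h n) * (eps * ln (INR p)) <= INR (h n) * 1 by nra.
  move=> h1; apply: (Rmult_le_reg_l (INR (h n))) => //.
have hlp' : ln (INR p) <= 1 / eps.
  apply: (Rmult_le_reg_l eps) => //. rewrite /Rdiv -Rmult_assoc Rinv_r_simpl_m; lra.
have : INR p < INR C.
  apply: Rle_lt_trans hC. rewrite -(exp_ln (INR p)); last lra.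
  case: (Rle_lt_or_eq_dec _ _ hlp') => h1; [apply: Rlt_le; exact: exp_increasing h1 | rewrite h1; lra].
move/INR_lt/ltP => h1. exact: ltnW.
Qed.

Lemma main (eps : R) (heps : 0 < eps) :
  in_I0 (fun n : nat => Peano.le 2 n /\ INR (h n) / ln (INR n) >= eps).
Proof.
set A := (fun n : nat => _).
have conv : forall t, 0 < t -> series_conv A t.
  move=> t tp.
  have [C hC] := INR_unbounded (exp (1 / eps)).
  have [B HB] := smooth_bound t tp C.
  rewrite /series_conv.
  match goal with |- exists l, infinite_sum ?f l => set a := f end.
  have a0 : forall k, 0 <= a k.
    case=> [|k]; rewrite /a /=; first lra.
    case: (ClassicalDescription.excluded_middle_informative (A k.+1)) => ? /=; [apply: Rlt_le; apply: Rpower_pos|lra].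
  have aw : forall N, sum_f_R0 a N <= sumR (w t C) N.
    elim=> [|N IH]; first (simpl; lra).
    change (sum_f_R0 a N + a N.+1 <= sumR (w t C) N + w t C N.+1).
    suff : a N.+1 <= w t C N.+1 by lra.
    rewrite /a /=. case: (ClassicalDescription.excluded_middle_informative (A N.+1)) => [[h2 hr]|_] /=; last exact: w_ge0.
    rewrite /w (A_smooth eps heps C hC N.+1 (introT leP h2) hr). apply: Rle_refl.
  have [l hl] : {l | Un_cv (sum_f_R0 a) l}.
    apply: growing_cv.
    - move=> N. change (sum_f_R0 a N <= sum_f_R0 a N + a N.+1). have := a0 N.+1; lra.
    - exists B => x [N ->]. apply: Rle_trans (aw N) (HB N).
  by exists l.
split.
  move=> n [h2 _]. lia.
split.
  by move=> x [x0 _]; lra.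
move=> b hb. apply: Rnot_lt_le => b0.
have hb2 : 0 < b / 2 by lra.
have := hb (b / 2) (conj hb2 (conv _ hb2)). lra.
Qed.

End H.

Theorem theorem6 (eps : R) (heps : 0 < eps) :
  in_I0 (fun n : nat => (2 <= n)%nat /\ INR (h n) / ln (INR n) >= eps).
Proof.
  exact (H.main eps heps).
Qed.
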